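(* Let $b>0$, let $x_0$ be as in the context and $\bar x:=\frac{a+\rho c}{\rho+b}$. Then $\bar x<x_0$.
   Context: Constants: $a\in\mathbb{R}$, $b>0$, $\sigma>0$, $\rho>0$, $c>0$. $\psi(x)=e^{\frac{(bx-a)^2}{2\sigma^2 b}}D_{-\rho/b}\big(-\frac{bx-a}{\sigma b}\sqrt{2b}\big)$ with $D_\beta(x)=\frac{e^{-x^2/4}}{\Gamma(-\beta)}\int_0^\infty t^{-\beta-1}e^{-t^2/2-xt}dt$ ($\beta<0$); $\psi$ is the positive, strictly increasing, strictly convex fundamental solution of $\frac12\sigma^2u''+(a-bx)u'-\rho u=0$. $x_0$ is the unique solution on $(c,\infty)$ of $(x-c)\psi'(x)-\psi(x)=0$. *)

(* Defs.v *)
From Stdlib Require Import Reals.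
From Coquelicot Require Import Coquelicot.
Open Scope R_scope.

Definition Gamma_fun (s : R) : R :=
  RInt_gen (fun t => Rpower t (s - 1) * exp (- t))
           (at_right 0) (Rbar_locally p_infty).

(* Parabolic cylinder function, integral representation valid for beta < 0:
   D_beta(x) = e^{-x^2/4}/Gamma(-beta) * int_0^oo t^{-beta-1} e^{-t^2/2 - x t} dt. *)
Definition Dpc (beta x : R) : R :=
  exp (- x ^ 2 / 4) / Gamma_fun (- beta) *
  RInt_gen (fun t => Rpower t (- beta - 1) * exp (- t ^ 2 / 2 - x * t))
           (at_right 0) (Rbar_locally p_infty).

Definition psi (a b sigma rho : R) (x : R) : R :=
  exp ((b * x - a) ^ 2 / (2 * sigma ^ 2 * b)) *
  Dpc (- rho / b) (- (b * x - a) / (sigma * b) * sqrt (2 * b)).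

Definition x0_eq (a b sigma rho c x : R) : Prop :=
  (x - c) * Derive (psi a b sigma rho) x - psi a b sigma rho x = 0.

(* Main.v *)
Require Import Defs.
From Stdlib Require Import FunctionalExtensionality.
From Coquelicot Require Import Coquelicot.
From Stdlib Require Import Reals Lra.
Open Scope R_scope.

Lemma ballR (x e y : R) : ball x e y <-> Rabs (y - x) < e.
Proof. reflexivity. Qed.

Lemma RInt_correctR (f : R -> R) a b : ex_RInt f a b -> is_RInt f a b (RInt f a b).
Proof. intros; apply (RInt_correct (V:=R_CompleteNormedModule)); auto. Qed.
Lemma ex_RInt_contR (f : R -> R) a b : (forall z, Rmin a b <= z <= Rmax a b -> continuous f z) -> ex_RInt f a b.
Proof. intros; apply (ex_RInt_continuous (V:=R_CompleteNormedModule)); auto. Qed.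

Lemma absint (f g : R -> R) (x y : R) :
  (forall t, Rmin x y <= t <= Rmax x y -> continuous f t /\ continuous g t /\ Rabs (f t) <= g t) ->
  Rabs (RInt f x y) <= Rabs (RInt g x y).
Proof.
  intros H.
  assert (Hf : ex_RInt f x y) by (apply ex_RInt_contR; intros; apply H; auto).
  assert (Hg : ex_RInt g x y) by (apply ex_RInt_contR; intros; apply H; auto).
  destruct (Rle_or_lt x y) as [Hxy|Hxy].
  - assert (Rabs (RInt f x y) <= RInt g x y).
    { apply (norm_RInt_le f g x y); auto.
      intros t Ht. apply H. rewrite Rmin_left, Rmax_right; auto.
      apply RInt_correctR; auto. apply RInt_correctR; auto. }
    eapply Rle_trans; [exact H0| apply Rle_abs].
  - rewrite <- (opp_RInt_swap f), <- (opp_RInt_swap g).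
    2: apply ex_RInt_swap; auto. 2: apply ex_RInt_swap; auto.
    unfold opp; simpl. rewrite !Rabs_Ropp.
    assert (Rabs (RInt f y x) <= RInt g y x).
    { apply (norm_RInt_le f g y x); [lra| |apply RInt_correctR; apply ex_RInt_swap; auto|apply RInt_correctR; apply ex_RInt_swap; auto].
      intros t Ht. apply H. rewrite Rmin_right, Rmax_left; lra. }
    eapply Rle_trans; [exact H0| apply Rle_abs].
Qed.

Lemma is_RInt_uniqueR (f : R -> R) a b l : is_RInt f a b l -> RInt f a b = l.
Proof. intros; apply (is_RInt_unique (V:=R_CompleteNormedModule)); auto. Qed.

Lemma RInt_ChaslesR (f : R -> R) a b c : ex_RInt f a b -> ex_RInt f b c -> RInt f a b + RInt f b c = RInt f a c.
Proof. intros; apply (RInt_Chasles (V:=R_CompleteNormedModule)); auto. Qed.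

Lemma cmp (Fa Fb : (R -> Prop) -> Prop) {PFa : ProperFilter Fa} {PFb : ProperFilter Fb}
  (A0 B0 : R -> Prop) (f g : R -> R) lg :
  Fa A0 -> Fb B0 ->
  (forall a b, A0 a -> B0 b -> a <= b) ->
  (forall a b x, A0 a -> B0 b -> a <= x <= b -> continuous f x /\ continuous g x /\ Rabs (f x) <= g x) ->
  is_RInt_gen g Fa Fb lg -> ex_RInt_gen f Fa Fb.
Proof.
  intros HA HB Hab Hd Hg.
  assert (K : forall a1 b1 x y, A0 a1 -> B0 b1 -> a1 <= x <= b1 -> a1 <= y <= b1 ->
     forall t, Rmin x y <= t <= Rmax x y -> continuous f t /\ continuous g t /\ Rabs (f t) <= g t).
  { intros a1 b1 x y Ha Hb Hx Hy t Ht. apply (Hd a1 b1 t Ha Hb).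
    split; [apply Rle_trans with (Rmin x y); [apply Rmin_glb|]|apply Rle_trans with (Rmax x y); [|apply Rmax_lub]]; lra. }
  assert (Kf : forall a1 b1 x y, A0 a1 -> B0 b1 -> a1 <= x <= b1 -> a1 <= y <= b1 -> ex_RInt f x y).
  { intros. apply ex_RInt_contR. intros; apply (K a1 b1 x y); auto. }
  assert (Kg : forall a1 b1 x y, A0 a1 -> B0 b1 -> a1 <= x <= b1 -> a1 <= y <= b1 -> ex_RInt g x y).
  { intros. apply ex_RInt_contR. intros; apply (K a1 b1 x y); auto. }
  assert (Ka : forall a1 b1 x y, A0 a1 -> B0 b1 -> a1 <= x <= b1 -> a1 <= y <= b1 ->
     Rabs (RInt f x y) <= Rabs (RInt g x y)).
  { intros. apply absint. intros; apply (K a1 b1 x y); auto. }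
  assert (H1 : filter_prod Fa Fb (fun x : R * R =>
     (exists y : R_CompleteSpace, is_RInt f (fst x) (snd x) y) /\
     (forall y1 y2 : R_CompleteSpace,
      is_RInt f (fst x) (snd x) y1 -> is_RInt f (fst x) (snd x) y2 -> y1 = y2))).
  { exists A0 B0; auto. intros a b Ha Hb; simpl. split.
    + exists (RInt f a b). apply RInt_correctR. apply (Kf a b); auto; specialize (Hab a b Ha Hb); lra.
    + intros y1 y2 H1 H2. rewrite <- (is_RInt_uniqueR _ _ _ _ H1). apply is_RInt_uniqueR; auto. }
  destruct (proj1 (filterlimi_locally_cauchy (F:=filter_prod Fa Fb)
     (fun ab y => is_RInt f (fst ab) (snd ab) y) H1)) as [l Hl].
  - intros eps.
    assert (He : 0 < eps / 4) by (destruct eps; simpl; lra).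
    destruct (proj1 (filterlimi_locally _ lg) Hg (mkposreal _ He)) as [Q RR HQ HR HQR].
    exists (fun ab => (Q (fst ab) /\ A0 (fst ab)) /\ (RR (snd ab) /\ B0 (snd ab))).
    split.
    + exists (fun a => Q a /\ A0 a) (fun b => RR b /\ B0 b); try (apply filter_and; auto). auto.
    + intros [a b] [a' b'] [[Qa Aa] [Rb Bb]] [[Qa' Aa'] [Rb' Bb']] y y' Hy Hy'. simpl in *.
      apply is_RInt_uniqueR in Hy. apply is_RInt_uniqueR in Hy'. subst y y'.
      apply ballR.
      pose proof (Hab a b Aa Bb). pose proof (Hab a' b Aa' Bb). pose proof (Hab a b' Aa Bb').
      pose proof (Hab a' b' Aa' Bb').
      destruct (HQR a' b Qa' Rb) as [z1 [Hz1 Bz1]]. destruct (HQR a b Qa Rb) as [z2 [Hz2 Bz2]].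
      destruct (HQR a b' Qa Rb') as [z3 [Hz3 Bz3]]. simpl in *.
      change (Rabs (z1 - lg) < eps/4) in Bz1; change (Rabs (z2 - lg) < eps/4) in Bz2; change (Rabs (z3 - lg) < eps/4) in Bz3.
      apply is_RInt_uniqueR in Hz1, Hz2, Hz3.
      assert (E1 : @eq R (RInt f a' b') (RInt f a' a + RInt f a b + RInt f b b')).
      { rewrite Rplus_assoc, (RInt_ChaslesR f a b b'), (RInt_ChaslesR f a' a b'); auto.
        - destruct (Rle_or_lt a a'); [apply (Kf a b') | apply (Kf a' b')]; auto; lra.
        - apply (Kf a b'); auto; lra.
        - apply (Kf a b); auto; lra.
        - destruct (Rle_or_lt b b'); [apply (Kf a b') | apply (Kf a b)]; auto; lra. }
      assert (E2 : @eq R (RInt g a' a) (RInt g a' b - RInt g a b)).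
      { assert (C : @eq R (RInt g a' a + RInt g a b) (RInt g a' b)); [apply RInt_ChaslesR|lra].
        - destruct (Rle_or_lt a a'); [apply (Kg a b) | apply (Kg a' b)]; auto; lra.
        - apply (Kg a b); auto; lra. }
      assert (E3 : @eq R (RInt g b b') (RInt g a b' - RInt g a b)).
      { assert (C : @eq R (RInt g a b + RInt g b b') (RInt g a b')); [apply RInt_ChaslesR|lra].
        - apply (Kg a b); auto; lra.
        - destruct (Rle_or_lt b b'); [apply (Kg a b') | apply (Kg a b)]; auto; lra. }
      assert (I1 : Rabs (RInt f a' a) <= Rabs (RInt g a' a)).
      { destruct (Rle_or_lt a a'); [apply (Ka a b) | apply (Ka a' b)]; auto; lra. }
      assert (I2 : Rabs (RInt f b b') <= Rabs (RInt g b b')).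
      { destruct (Rle_or_lt b b'); [apply (Ka a b') | apply (Ka a b)]; auto; lra. }
      rewrite E2, Hz1, Hz2 in I1. rewrite E3, Hz3, Hz2 in I2.
      rewrite E1.
      replace (RInt f a' a + RInt f a b + RInt f b b' - RInt f a b) with (RInt f a' a + RInt f b b') by ring.
      eapply Rle_lt_trans; [apply Rabs_triang|].
      assert (Rabs (z1 - z2) < eps / 2).
      { replace (z1 - z2) with ((z1 - lg) - (z2 - lg)) by ring.
        eapply Rle_lt_trans; [apply Rabs_triang|]. rewrite Rabs_Ropp. lra. }
      assert (Rabs (z3 - z2) < eps / 2).
      { replace (z3 - z2) with ((z3 - lg) - (z2 - lg)) by ring.
        eapply Rle_lt_trans; [apply Rabs_triang|]. rewrite Rabs_Ropp. lra. }
      lra.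
  - exists l. exact Hl.
Qed.

Lemma FTC_gen (Fa Fb : (R -> Prop) -> Prop) {FFa : Filter Fa} {FFb : Filter Fb}
  (A0 B0 : R -> Prop) (G g : R -> R) la lb :
  Fa A0 -> Fb B0 -> (forall a b, A0 a -> B0 b -> 0 < a <= b) ->
  (forall x, 0 < x -> is_derive G x (g x)) -> (forall x, 0 < x -> continuous g x) ->
  filterlim G Fa (locally la) -> filterlim G Fb (locally lb) ->
  is_RInt_gen g Fa Fb (lb - la).
Proof.
  intros HA HB Hab Hd Hc Hla Hlb.
  assert (HD: forall x, 0 < x -> Derive G x = g x) by (intros; apply is_derive_unique; auto).
  apply is_RInt_gen_ext with (Derive G).
  - exists A0 B0; auto. intros a b Ha Hb x Hx; simpl in Hx. specialize (Hab a b Ha Hb).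
    rewrite Rmin_left, Rmax_right in Hx by lra. apply HD; lra.
  - apply is_RInt_gen_Derive; auto.
    + exists A0 B0; auto. intros a b Ha Hb x Hx; simpl in Hx. specialize (Hab a b Ha Hb).
      rewrite Rmin_left, Rmax_right in Hx by lra. exists (g x). apply Hd; lra.
    + exists A0 B0; auto. intros a b Ha Hb x Hx; simpl in Hx. specialize (Hab a b Ha Hb).
      rewrite Rmin_left, Rmax_right in Hx by lra.
      apply continuous_ext_loc with g.
      * apply locally_interval with 0 p_infty; simpl; try lra; auto.
        intros y Hy _. symmetry; apply HD; auto.
      * apply Hc; lra.
Qed.

Lemma lim_sq (F : (R -> Prop) -> Prop) {FF : Filter F} (h phi : R -> R) :
  F (fun t => Rabs (h t) <= phi t) -> filterlim phi F (locally 0) -> filterlim h F (locally 0).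
Proof.
  intros Hb Hp. apply filterlim_locally. intros eps.
  pose proof (proj1 (filterlim_locally phi 0) Hp eps) as H.
  apply (filter_imp (fun t => Rabs (h t) <= phi t /\ ball 0 eps (phi t))).
  - intros t [H1 H2]. change (Rabs (h t - 0) < eps). change (Rabs (phi t - 0) < eps) in H2.
    rewrite Rminus_0_r in *. pose proof (Rle_abs (phi t)). lra.
  - apply filter_and; auto.
Qed.

Lemma lim_at0 (k c q : R) : 0 < q ->
  filterlim (fun t => k * exp (c + q * ln t)) (at_right 0) (locally 0).
Proof.
  intros Hq. apply filterlim_locally. intros eps.
  set (e' := eps / (Rabs k + 1)).
  assert (He' : 0 < e') by (unfold e'; destruct eps; simpl; apply Rdiv_lt_0_compat; [lra| pose proof (Rabs_pos k); lra]).
  set (d := exp ((ln e' - c) / q)).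
  assert (Hd : 0 < d) by apply exp_pos.
  exists (mkposreal d Hd). intros t Ht Ht0.
  change (Rabs (t - 0) < d) in Ht. rewrite Rminus_0_r, Rabs_right in Ht by lra.
  change (Rabs (k * exp (c + q * ln t) - 0) < eps). rewrite Rminus_0_r, Rabs_mult, (Rabs_right (exp _)) by (apply Rle_ge, Rlt_le, exp_pos).
  assert (ln t < (ln e' - c) / q).
  { unfold d in Ht. rewrite <- (ln_exp ((ln e' - c) / q)). apply ln_increasing; auto. }
  assert (c + q * ln t < ln e').
  { apply Rmult_lt_compat_l with (r := q) in H; auto. field_simplify in H; lra. }
  apply exp_increasing in H0. rewrite exp_ln in H0 by auto.
  assert (E : pos eps = e' * (Rabs k + 1)) by (unfold e'; field; pose proof (Rabs_pos k); lra).
  rewrite E. pose proof (Rabs_pos k). pose proof (exp_pos (c + q * ln t)). nra.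
Qed.

Lemma lim_inf (c : R) : filterlim (fun t => exp (c - t)) (Rbar_locally p_infty) (locally 0).
Proof.
  apply filterlim_locally. intros eps. exists (c - ln eps). intros t Ht.
  change (Rabs (exp (c - t) - 0) < eps). rewrite Rminus_0_r, Rabs_right by (apply Rle_ge, Rlt_le, exp_pos).
  rewrite <- (exp_ln eps) by (destruct eps; auto). apply exp_increasing; lra.
Qed.

Definition fp (p u t : R) : R := exp (p * ln t) * exp (- t ^ 2 / 2 + u * t).

Lemma fp_pos p u t : 0 < fp p u t.
Proof. unfold fp. apply Rmult_lt_0_compat; apply exp_pos. Qed.

Lemma fp_derive p u t : 0 < t -> ex_derive (fp p u) t.
Proof. intros. unfold fp. auto_derive. auto. Qed.

Lemma ex_derive_contR (f : R -> R) x : ex_derive f x -> continuous f x.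
Proof. intros. apply (@ex_derive_continuous R_AbsRing R_NormedModule); auto. Qed.

Lemma fp_cont p u t : 0 < t -> continuous (fp p u) t.
Proof. intros. apply ex_derive_contR. apply fp_derive; auto. Qed.

Lemma expln_cont c p t : 0 < t -> continuous (fun t => exp (c + p * ln t)) t.
Proof. intros. apply ex_derive_contR. auto_derive. auto. Qed.

Lemma exp_cont c t : continuous (fun t => exp (c - t)) t.
Proof. intros. apply ex_derive_contR. auto_derive. auto. Qed.

Lemma at_point_lim (G : R -> R) x : filterlim G (at_point x) (locally (G x)).
Proof. intros P HP. unfold filtermap, at_point. apply locally_singleton. auto. Qed.

Lemma bound0 p u t : 0 < t <= 1 -> fp p u t <= exp (Rabs u + p * ln t).
Proof.
  intros Ht. unfold fp. rewrite <- exp_plus.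
  destruct (Rle_lt_dec (p * ln t + (- t ^ 2 / 2 + u * t)) (Rabs u + p * ln t)) as [H|H].
  - destruct H. left; apply exp_increasing; auto. right; rewrite H; auto.
  - exfalso. pose proof (Rle_abs u). pose proof (Rle_abs (-u)). rewrite Rabs_Ropp in H1.
    assert (u * t <= Rabs u) by nra. nra.
Qed.

Lemma ln_le_id t : 0 < t -> ln t <= t - 1.
Proof. intros. pose proof (exp_ineq1_le (ln t)). rewrite exp_ln in H0; auto. lra. Qed.

Lemma bound1 p u t : 1 <= t ->
  fp p u t <= exp ((Rabs p + Rabs u + 1) ^ 2 / 2 - t).
Proof.
  intros Ht. unfold fp. rewrite <- exp_plus.

  assert (L0 : 0 <= ln t) by (rewrite <- ln_1; apply ln_le; lra).
  pose proof (ln_le_id t ltac:(lra)) as L1. pose proof (Rabs_pos u). pose proof (Rabs_pos p).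
  assert (P1 : p * ln t <= Rabs p * t).
  { pose proof (Rle_abs p). pose proof (Rabs_pos p). nra. }
  assert (P2 : u * t <= Rabs u * t).
  { pose proof (Rle_abs u). nra. }
  assert (Hx : p * ln t + (- t ^ 2 / 2 + u * t) <= (Rabs p + Rabs u + 1) ^ 2 / 2 - t).
  { pose proof (pow2_ge_0 (Rabs p + Rabs u + 1 - t)). nra. }
  destruct Hx as [Hx|Hx]. left; apply exp_increasing; auto. right; rewrite Hx; auto.
Qed.

Lemma ex_fp p u : -1 < p -> ex_RInt_gen (fp p u) (at_right 0) (Rbar_locally p_infty).
Proof.
  intros Hp.
  apply ex_RInt_gen_Chasles with 1.
  - apply (cmp _ _ (fun a => 0 < a < 1) (fun b => b = 1) _ (fun t => exp (Rabs u + p * ln t))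
      ((/(p+1) * exp (Rabs u + (p+1) * ln 1)) - 0)).
    + assert (H1 : 0 < 1) by lra. exists (mkposreal 1 H1). intros y Hy Hy0.
      change (Rabs (y - 0) < 1) in Hy. rewrite Rminus_0_r, Rabs_right in Hy by lra. lra.
    + reflexivity.
    + intros a b Ha Hb; lra.
    + intros a b x Ha Hb Hx. subst b. split; [apply fp_cont; lra|split; [apply expln_cont; lra|]].
      rewrite Rabs_right by (apply Rle_ge, Rlt_le, fp_pos). apply bound0; lra.
    + apply (FTC_gen _ _ (fun a => 0 < a < 1) (fun b => b = 1) (fun t => /(p+1) * exp (Rabs u + (p+1) * ln t))).
      * assert (H1 : 0 < 1) by lra. exists (mkposreal 1 H1). intros y Hy Hy0.
        change (Rabs (y - 0) < 1) in Hy. rewrite Rminus_0_r, Rabs_right in Hy by lra. lra.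
      * reflexivity.
      * intros a b Ha Hb; lra.
      * intros x Hx. auto_derive; auto.
        replace (Rabs u + p * ln x) with ((Rabs u + (p+1) * ln x) + - ln x) by ring.
        rewrite (exp_plus _ (- ln x)), exp_Ropp, exp_ln by auto. field. split; lra.
      * intros; apply expln_cont; auto.
      * apply lim_at0; lra.
      * exact (at_point_lim (fun t => /(p+1) * exp (Rabs u + (p+1) * ln t)) 1).
  - set (c := (Rabs p + Rabs u + 1) ^ 2 / 2).
    apply (cmp _ _ (fun a => a = 1) (fun b => 1 < b) _ (fun t => exp (c - t)) (0 - - exp (c - 1))).
    + reflexivity.
    + exists 1. auto.
    + intros a b Ha Hb; lra.
    + intros a b x Ha Hb Hx. subst a. split; [apply fp_cont; lra|split; [apply exp_cont|]].
      rewrite Rabs_right by (apply Rle_ge, Rlt_le, fp_pos). apply bound1; lra.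
    + apply (FTC_gen _ _ (fun a => a = 1) (fun b => 1 < b) (fun t => - exp (c - t))).
      * reflexivity.
      * exists 1; auto.
      * intros a b Ha Hb; lra.
      * intros x Hx. auto_derive; auto. rewrite Ropp_mult_distr_l_reverse, Ropp_involutive, Rmult_1_l; reflexivity.
      * intros; apply exp_cont.
      * exact (at_point_lim (fun t => - exp (c - t)) 1).
      * apply (lim_sq (Rbar_locally p_infty)) with (fun t => exp (c - t)).
        -- exists 0. intros x _. rewrite Rabs_Ropp, Rabs_right by (apply Rle_ge, Rlt_le, exp_pos). lra.
        -- apply lim_inf.
Qed.

Lemma RInt_gen_correctR (f : R -> R) :
  ex_RInt_gen f (at_right 0) (Rbar_locally p_infty) ->
  is_RInt_gen f (at_right 0) (Rbar_locally p_infty) (RInt_gen f (at_right 0) (Rbar_locally p_infty)).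
Proof. intros; apply (RInt_gen_correct (V:=R_CompleteNormedModule)); auto. Qed.

Lemma fp_exR p u a b : 0 < a -> 0 < b -> ex_RInt (fp p u) a b.
Proof.
  intros. apply ex_RInt_contR. intros z Hz. apply fp_cont.
  assert (0 < Rmin a b) by (apply Rmin_glb_lt; auto). lra.
Qed.

Lemma pos_int p u : -1 < p -> 0 < RInt_gen (fp p u) (at_right 0) (Rbar_locally p_infty).
Proof.
  intros Hp.
  pose proof (RInt_gen_correctR _ (ex_fp p u Hp)) as HI.
  set (I := RInt_gen (fp p u) (at_right 0) (Rbar_locally p_infty)) in *.
  set (m := RInt (fp p u) 1 2).
  assert (Hm : 0 < m).
  { apply RInt_gt_0; [lra| intros; apply fp_pos| intros; apply fp_cont; lra]. }
  assert (Hm2 : 0 < m / 2) by lra.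
  pose proof (proj1 (filterlimi_locally _ I) HI (mkposreal _ Hm2)) as H.
  assert (H2 : filter_prod (at_right 0) (Rbar_locally p_infty) (fun ab => 0 < fst ab < 1 /\ 2 < snd ab)).
  { assert (H1 : 0 < 1) by lra. exists (fun a => 0 < a < 1) (fun b => 2 < b).
    - exists (mkposreal 1 H1). intros y Hy Hy0.
      change (Rabs (y - 0) < 1) in Hy. rewrite Rminus_0_r, Rabs_right in Hy by lra. lra.
    - exists 2; auto.
    - intros; simpl; auto. }
  destruct (filter_ex _ (filter_and _ _ H H2)) as [[a b] [[z [Hz Bz]] [Ha Hb]]].
  simpl in *. change (Rabs (z - I) < m / 2) in Bz.
  apply is_RInt_uniqueR in Hz.
  assert (E : RInt (fp p u) a 1 + RInt (fp p u) 1 2 + RInt (fp p u) 2 b = RInt (fp p u) a b).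
  { rewrite (RInt_ChaslesR _ a 1 2), (RInt_ChaslesR _ a 2 b); try apply fp_exR; lra. }
  assert (0 <= RInt (fp p u) a 1) by (apply RInt_ge_0; [lra|apply fp_exR; lra|intros; apply Rlt_le, fp_pos]).
  assert (0 <= RInt (fp p u) 2 b) by (apply RInt_ge_0; [lra|apply fp_exR; lra|intros; apply Rlt_le, fp_pos]).
  unfold m in *. rewrite Hz in E. apply Rabs_def2 in Bz. lra.
Qed.

Definition Jq (q u : R) : R := RInt_gen (fp q u) (at_right 0) (Rbar_locally p_infty).

Lemma lin3 (f1 f2 f3 : R -> R) l1 l2 l3 k1 k2 :
  is_RInt_gen f1 (at_right 0) (Rbar_locally p_infty) l1 ->
  is_RInt_gen f2 (at_right 0) (Rbar_locally p_infty) l2 ->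
  is_RInt_gen f3 (at_right 0) (Rbar_locally p_infty) l3 ->
  is_RInt_gen (fun t => k1 * f1 t + k2 * f2 t - f3 t) (at_right 0) (Rbar_locally p_infty)
    (k1 * l1 + k2 * l2 - l3).
Proof.
  intros H1 H2 H3.
  apply (is_RInt_gen_scal _ k1) in H1. apply (is_RInt_gen_scal _ k2) in H2.
  pose proof (is_RInt_gen_minus _ _ _ _ (is_RInt_gen_plus _ _ _ _ H1 H2) H3) as H.
  exact H.
Qed.

Lemma at_right01 : at_right 0 (fun a => 0 < a < 1).
Proof.
  assert (H1 : 0 < 1) by lra. exists (mkposreal 1 H1). intros y Hy Hy0.
  change (Rabs (y - 0) < 1) in Hy. rewrite Rminus_0_r, Rabs_right in Hy by lra. lra.
Qed.

Lemma ibp p u : 0 < p -> p * Jq (p - 1) u + u * Jq p u - Jq (p + 1) u = 0.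
Proof.
  intros Hp.
  pose proof (lin3 _ _ _ _ _ _ p u (RInt_gen_correctR _ (ex_fp (p - 1) u ltac:(lra)))
     (RInt_gen_correctR _ (ex_fp p u ltac:(lra))) (RInt_gen_correctR _ (ex_fp (p+1) u ltac:(lra)))) as H.
  set (c := (Rabs p + Rabs u + 1) ^ 2 / 2).
  assert (H0 : is_RInt_gen (fun t => p * fp (p - 1) u t + u * fp p u t - fp (p + 1) u t)
            (at_right 0) (Rbar_locally p_infty) (0 - 0)).
  { apply (FTC_gen _ _ (fun a => 0 < a < 1) (fun b => 1 < b) (fp p u)).
    - apply at_right01.
    - exists 1; auto.
    - intros; lra.
    - intros x Hx. unfold fp. auto_derive; auto.
      replace ((p - 1) * ln x) with (p * ln x + - ln x) by ring.
      replace ((p + 1) * ln x) with (p * ln x + ln x) by ring.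
      rewrite !(exp_plus (p * ln x)), exp_Ropp, exp_ln by auto.
      replace (- (x * (x * 1)) * / 2 + u * x) with (- x ^ 2 / 2 + u * x) by field. field. lra.
    - intros x Hx. apply (continuous_minus (V:=R_NormedModule)).
      apply (continuous_plus (V:=R_NormedModule)).
      apply (continuous_scal_r (V:=R_NormedModule)). apply fp_cont; auto.
      apply (continuous_scal_r (V:=R_NormedModule)). apply fp_cont; auto.
      apply fp_cont; auto.
    - apply (lim_sq (at_right 0)) with (fun t => 1 * exp (Rabs u + p * ln t)).
      + apply (filter_imp (fun a => 0 < a < 1)); [|apply at_right01].
        intros t Ht. rewrite Rmult_1_l, Rabs_right by (apply Rle_ge, Rlt_le, fp_pos). apply bound0; lra.
      + apply lim_at0; auto.
    - apply (lim_sq (Rbar_locally p_infty)) with (fun t => exp (c - t)).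
      + exists 1. intros t Ht. rewrite Rabs_right by (apply Rle_ge, Rlt_le, fp_pos). apply bound1; lra.
      + apply lim_inf. }
  unfold Jq.
  apply (is_RInt_gen_unique (V:=R_CompleteNormedModule)) in H.
  apply (is_RInt_gen_unique (V:=R_CompleteNormedModule)) in H0.
  rewrite <- H, H0. ring.
Qed.
Lemma expbound x : Rabs (exp x - 1 - x) <= x ^ 2 * exp (Rabs x).
Proof.
  pose proof (exp_ineq1_le x) as H1.
  pose proof (exp_ineq1_le (-x)) as H2.
  assert (HEF : exp x * exp (-x) = 1) by (rewrite <- exp_plus; replace (x + - x) with 0 by ring; apply exp_0).
  pose proof (exp_pos x). pose proof (exp_pos (-x)).
  rewrite Rabs_right by lra.
  destruct (Rle_or_lt 0 x) as [Hx|Hx].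
  - rewrite Rabs_right by lra.
    assert (exp x - 1 <= x * exp x) by nra.
    assert (exp x - 1 - x <= x * (exp x - 1)) by nra.
    nra.
  - rewrite Rabs_left by lra.
    assert (exp x * (1 - x) <= 1) by nra.
    assert ((exp x - 1 - x) * (1 - x) <= x ^ 2) by nra.
    assert (exp x - 1 - x <= (exp x - 1 - x) * (1 - x)) by nra.
    assert (x ^ 2 <= x ^ 2 * exp (- x)) by nra.
    lra.
Qed.

Lemma ptbound p u h t : 0 < t -> Rabs h <= 1 ->
  Rabs (fp p (u + h) t - fp p u t - h * fp (p + 1) u t) <= h ^ 2 * fp (p + 2) (Rabs u + 1) t.
Proof.
  intros Ht Hh. unfold fp.
  set (A := exp (p * ln t)). set (Q := exp (- t ^ 2 / 2 + u * t)).
  set (Z := exp (- t ^ 2 / 2 + (Rabs u + 1) * t)).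
  assert (E1 : exp (- t ^ 2 / 2 + (u + h) * t) = Q * exp (h * t)).
  { unfold Q. rewrite <- exp_plus. f_equal. ring. }
  assert (E2 : exp ((p + 1) * ln t) = A * t).
  { unfold A. replace ((p + 1) * ln t) with (p * ln t + ln t) by ring. rewrite exp_plus, exp_ln; auto. }
  assert (E3 : exp ((p + 2) * ln t) = A * t ^ 2).
  { unfold A. replace ((p + 2) * ln t) with (p * ln t + ln t + ln t) by ring. rewrite !exp_plus, exp_ln; auto. ring. }
  rewrite E1, E2, E3. fold Z.
  assert (HQY : Q * exp (Rabs (h * t)) <= Z).
  { unfold Q, Z. rewrite <- exp_plus. rewrite Rabs_mult, (Rabs_right t) by lra.
    assert (- t ^ 2 / 2 + u * t + Rabs h * t <= - t ^ 2 / 2 + (Rabs u + 1) * t).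
    { pose proof (Rle_abs u). nra. }
    destruct H. left; apply exp_increasing; auto. right; rewrite H; auto. }
  pose proof (expbound (h * t)) as HB.
  assert (HA : 0 < A) by apply exp_pos. assert (HQ : 0 < Q) by apply exp_pos.
  replace (A * (Q * exp (h * t)) - A * Q - h * (A * t * Q)) with (A * Q * (exp (h * t) - 1 - h * t)) by ring.
  rewrite Rabs_mult, (Rabs_right (A * Q)) by nra.
  apply Rle_trans with (A * Q * ((h * t) ^ 2 * exp (Rabs (h * t)))).
  - apply Rmult_le_compat_l; nra.
  - replace (A * Q * ((h * t) ^ 2 * exp (Rabs (h * t)))) with (A * (h * t) ^ 2 * (Q * exp (Rabs (h * t)))) by ring.
    replace (h ^ 2 * (A * t ^ 2 * Z)) with (A * (h * t) ^ 2 * Z) by ring.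
    apply Rmult_le_compat_l; [|auto]. pose proof (pow2_ge_0 (h * t)). nra.
Qed.

Lemma Dbound p u h : -1 < p -> Rabs h <= 1 ->
  Rabs (Jq p (u + h) - Jq p u - h * Jq (p + 1) u) <= h ^ 2 * Jq (p + 2) (Rabs u + 1).
Proof.
  intros Hp Hh.
  pose proof (is_RInt_gen_scal (Fa:=at_right 0) (Fb:=Rbar_locally p_infty) _ h _ (RInt_gen_correctR _ (ex_fp (p + 1) u ltac:(lra)))) as H3.
  pose proof (lin3 (fp p (u + h)) (fp p u) (fun t => h * fp (p + 1) u t) _ _ _ 1 (-1)
     (RInt_gen_correctR _ (ex_fp p (u + h) ltac:(lra)))
     (RInt_gen_correctR _ (ex_fp p u ltac:(lra))) H3) as Hf.
  pose proof (is_RInt_gen_scal (Fa:=at_right 0) (Fb:=Rbar_locally p_infty) _ (h ^ 2) _ (RInt_gen_correctR _ (ex_fp (p + 2) (Rabs u + 1) ltac:(lra)))) as Hg.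
  assert (N' : Rabs (1 * Jq p (u + h) + -1 * Jq p u - h * Jq (p + 1) u) <= h ^ 2 * Jq (p + 2) (Rabs u + 1)).
  { refine (RInt_gen_norm (V:=R_CompleteNormedModule) (Fa:=at_right 0) (Fb:=Rbar_locally p_infty) _ _ _ _ _ _ Hf Hg).
    - exists (fun a => 0 < a < 1) (fun b => 1 < b). apply at_right01. exists 1; auto.
      intros; simpl; lra.
    - exists (fun a => 0 < a < 1) (fun b => 1 < b). apply at_right01. exists 1; auto.
      intros a b Ha Hb x Hx; simpl in *.
      change (Rabs (1 * fp p (u + h) x + -1 * fp p u x - h * fp (p + 1) u x) <= h ^ 2 * fp (p + 2) (Rabs u + 1) x).
      replace (1 * fp p (u + h) x + -1 * fp p u x - h * fp (p + 1) u x) with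
        (fp p (u + h) x - fp p u x - h * fp (p + 1) u x) by ring.
      apply ptbound; auto; lra. }
  replace (Jq p (u + h) - Jq p u - h * Jq (p + 1) u) with (1 * Jq p (u + h) + -1 * Jq p u - h * Jq (p + 1) u) by ring.
  exact N'.
Qed.

Lemma deriv_J p u : -1 < p -> is_derive (fun v => Jq p v) u (Jq (p + 1) u).
Proof.
  intros Hp. apply is_derive_Reals. intros eps Heps.
  assert (HM : 0 < Jq (p + 2) (Rabs u + 1)) by exact (pos_int (p + 2) (Rabs u + 1) ltac:(lra)).
  set (M := Jq (p + 2) (Rabs u + 1)) in *.
  assert (Hd : 0 < Rmin 1 (eps / (M + 1))).
  { apply Rmin_glb_lt; [lra|apply Rdiv_lt_0_compat; lra]. }
  exists (mkposreal _ Hd). intros h Hh0 Hh. simpl in Hh.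
  assert (H1 : Rabs h < 1) by (eapply Rlt_le_trans; [exact Hh| apply Rmin_l]).
  assert (H2 : Rabs h < eps / (M + 1)) by (eapply Rlt_le_trans; [exact Hh| apply Rmin_r]).
  pose proof (Dbound p u h Hp ltac:(lra)) as D. fold M in D.
  assert (Hha : 0 < Rabs h) by (apply Rabs_pos_lt; auto).
  generalize D. generalize (Jq p (u + h)) (Jq p u) (Jq (p + 1) u). clearbody M. intros A B C D'.
  replace ((A - B) / h - C) with ((A - B - h * C) / h) by (field; auto).
  unfold Rdiv. rewrite Rabs_mult, Rabs_inv.
  apply Rle_lt_trans with (h ^ 2 * M * / Rabs h).
  - apply Rmult_le_compat_r; auto. left; apply Rinv_0_lt_compat; auto.
  - replace (h ^ 2) with (Rabs h * Rabs h) by (rewrite <- Rabs_mult, Rabs_right; [ring| nra]).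
    replace (Rabs h * Rabs h * M * / Rabs h) with (Rabs h * M) by (field; lra).
    apply Rmult_lt_compat_r with (r := M) in H2; auto.
    apply Rle_lt_trans with (eps / (M + 1) * M); [lra|].
    apply Rmult_lt_reg_r with (M + 1); [lra|].
    replace (eps / (M + 1) * M * (M + 1)) with (eps * M) by (field; lra).
    rewrite Rmult_plus_distr_l, Rmult_1_r. lra.
Qed.
Lemma psi_formula a b sigma rho : 0 < b -> 0 < sigma ->
  forall x, psi a b sigma rho x =
    / Gamma_fun (- (- rho / b)) * Jq (- (- rho / b) - 1) ((b * x - a) / (sigma * b) * sqrt (2 * b)).
Proof.
  intros Hb Hs x. unfold psi, Dpc, Jq.
  assert (Hsq : sqrt (2 * b) ^ 2 = 2 * b) by (rewrite <- Rsqr_pow2; apply Rsqr_sqrt; lra).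
  set (s := sqrt (2 * b)) in *.
  set (z := - (b * x - a) / (sigma * b) * s).
  assert (E : exp ((b * x - a) ^ 2 / (2 * sigma ^ 2 * b)) * exp (- z ^ 2 / 4) = 1).
  { rewrite <- exp_plus. rewrite <- exp_0. f_equal. unfold z.
    replace ((- (b * x - a) / (sigma * b) * s) ^ 2) with ((b * x - a) ^ 2 / (sigma * b) ^ 2 * s ^ 2) by (field; lra).
    rewrite Hsq. field. lra. }
  assert (F : (fun t => Rpower t (- (- rho / b) - 1) * exp (- t ^ 2 / 2 - z * t)) =
              fp (- (- rho / b) - 1) ((b * x - a) / (sigma * b) * s)).
  { apply functional_extensionality. intros t. unfold fp, Rpower. f_equal. f_equal. unfold z. field. lra. }
  rewrite F.
  set (G := Gamma_fun (- (- rho / b))).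
  set (I := RInt_gen (fp (- (- rho / b) - 1) ((b * x - a) / (sigma * b) * s)) (at_right 0) (Rbar_locally p_infty)).
  set (A := exp ((b * x - a) ^ 2 / (2 * sigma ^ 2 * b))) in *.
  set (B := exp (- z ^ 2 / 4)) in *.
  replace (A * (B / G * I)) with ((A * B) * (/ G * I)) by (unfold Rdiv; ring).
  rewrite E. ring.
Qed.

Theorem lemmaB1 (a b sigma rho c x0 : R) :
  0 < b -> 0 < sigma -> 0 < rho -> 0 < c ->
  c < x0 -> x0_eq a b sigma rho c x0 ->
  (forall x, c < x -> x0_eq a b sigma rho c x -> x = x0) ->
  (a + rho * c) / (rho + b) < x0.
Proof.
  intros Hb Hs Hr Hc Hx0 Heq Huniq.
  assert (Hrb : 0 < rho / b) by (apply Rdiv_lt_0_compat; auto).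
  assert (Hq : -1 < - (- rho / b) - 1).
  { replace (- (- rho / b)) with (rho / b) by (field; lra). lra. }
  pose proof (psi_formula a b sigma rho Hb Hs) as HP.
  set (q := - (- rho / b) - 1) in *.
  assert (Hs2 : 0 < sqrt (2 * b)) by (apply sqrt_lt_R0; lra).
  set (s := sqrt (2 * b)) in *.
  set (C := / Gamma_fun (- (- rho / b))) in *.
  set (uf := fun x => (b * x - a) / (sigma * b) * s).
  assert (HP' : forall x, psi a b sigma rho x = C * Jq q (uf x)) by (intros; rewrite HP; reflexivity).
  assert (Hpsi : psi a b sigma rho = fun x => C * Jq q (uf x)) by (apply functional_extensionality; auto).
  assert (HD : forall x, Derive (psi a b sigma rho) x = C * (s / sigma * Jq (q + 1) (uf x))).
  { intros x. rewrite Hpsi. apply is_derive_unique. apply is_derive_scal.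
    assert (Hu : is_derive uf x (s / sigma)).
    { unfold uf. auto_derive; auto. field. lra. }
    pose proof (is_derive_comp (fun v => Jq q v) uf x _ _ (deriv_J q (uf x) Hq) Hu) as H.
    exact H. }
  unfold x0_eq in Heq. rewrite HD, HP' in Heq.
  destruct (Req_dec C 0) as [HC|HC].
  { exfalso. assert (x0 + 1 = x0).
    { apply Huniq; [lra|]. unfold x0_eq. rewrite HD, HP', HC. ring. }
    lra. }
  set (u0 := uf x0) in *.
  set (J := Jq q u0) in *. set (K := Jq (q + 1) u0) in *.
  assert (E : C * (J - (x0 - c) * (s / sigma * K)) = 0).
  { transitivity (-((x0 - c) * (C * (s / sigma * K)) - C * J)); [ring| rewrite Heq; ring]. }
  apply Rmult_integral in E. destruct E as [E|E]; [contradiction|].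
  pose proof (ibp (q + 1) u0 ltac:(lra)) as IB.
  replace (q + 1 - 1) with q in IB by ring. fold J K in IB.
  assert (HK : 0 < K) by exact (pos_int (q + 1) u0 ltac:(lra)).
  assert (HL : 0 < Jq (q + 1 + 1) u0) by exact (pos_int (q + 1 + 1) u0 ltac:(lra)).
  set (L := Jq (q + 1 + 1) u0) in *.
  set (w := (q + 1) * (x0 - c) * (s / sigma) + u0).
  assert (HLw : L = K * w) by (unfold w; nra).
  assert (Hw : 0 < w).
  { destruct (Rlt_or_le 0 w) as [H|H]; auto. exfalso. nra. }
  assert (Hq1 : q + 1 = rho / b) by (unfold q; field; lra).
  assert (Hw' : w = s / (sigma * b) * (rho * (x0 - c) + b * x0 - a)).
  { unfold w, u0, uf. rewrite Hq1. field. split; lra. }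
  assert (Hpos : 0 < s / (sigma * b)) by (apply Rdiv_lt_0_compat; nra).
  assert (HT : 0 < rho * (x0 - c) + b * x0 - a).
  { destruct (Rlt_or_le 0 (rho * (x0 - c) + b * x0 - a)) as [H|H]; auto. exfalso. nra. }
  apply (Rmult_lt_reg_r (rho + b)); [lra|].
  replace ((a + rho * c) / (rho + b) * (rho + b)) with (a + rho * c) by (field; lra).
  lra.
Qed.
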